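(* Let $S\in V_{\mathrm{gen}}$ and let $e\in\mathfrak g_1$ be such that the orthogonal projection of $e$ onto each eigenspace of $S^2$ is nonzero. Let $N$ be the number of distinct eigenvalues of $S^2$. For all $T\in V$, if $TS^je=0$ for $j=0,\dots,2N-1$, then $T=0$.
   Context: $\mathfrak g=\mathfrak g_1\oplus\mathfrak g_2$ is the Lie algebra of a $2$-step stratified group ($[\mathfrak g_1,\mathfrak g_1]=\mathfrak g_2\ne\{0\}$, $[\mathfrak g,\mathfrak g_2]=0$), and $\langle\cdot,\cdot\rangle$ is an inner product on $\mathfrak g_1$. For $\mu\in\mathfrak g_2^*$, $J_\mu$ is the skew-symmetric endomorphism of $\mathfrak g_1$ with $\langle J_\mu x,x'\rangle=\mu([x,x'])$. $V=\{J_\mu:\mu\in\mathfrak g_2^*\}$, a linear subspace of the skew-symmetric endomorphisms of $\mathfrak g_1$, and $V_{\mathrm{gen}}$ is the set of elements of $V$ having the maximal number of distinct eigenvalues among elements of $V$. *)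

(* Defs.v *)
From HB Require Import structures.
From mathcomp Require Import all_boot all_order all_algebra.
From mathcomp Require Import complex.
Set Implicit Arguments. Unset Strict Implicit. Unset Printing Implicit Defensive.
Import Order.TTheory GRing.Theory Num.Theory.
Local Open Scope ring_scope.

(* Conventions: g1 = 'rV[R]_n with the standard inner product (after choosing
   an orthonormal basis), g2 = 'rV[R]_m.  An endomorphism T of g1 is an
   n x n matrix acting on row vectors by x |-> x *m T.  The Lie bracket of the
   2-step stratified algebra is encoded by br : g1 -> g1 -> g2 (the only
   nonzero part of the bracket).  A linear functional mu on g2 is represented
   by a column vector, mu(z) = (z *m mu) 0 0. *)

Definition dotv (R : comNzRingType) (n : nat) (u v : 'rV[R]_n) : R := (u *m v^T) 0 0.

Definition strat2_bracket (R : comNzRingType) (n m : nat)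
    (br : 'rV[R]_n -> 'rV[R]_n -> 'rV[R]_m) : Prop :=
  [/\ (forall a x y z, br (a *: x + y) z = a *: br x z + br y z),
      (forall x y, br x y = - br y x),
      (forall z : 'rV[R]_m, exists s : seq ('rV[R]_n * 'rV[R]_n),
          z = \sum_(p <- s) br p.1 p.2)
    & (0 < m)%N].

Definition isJ (R : comNzRingType) (n m : nat)
    (br : 'rV[R]_n -> 'rV[R]_n -> 'rV[R]_m) (mu : 'cV[R]_m) (T : 'M[R]_n) : Prop :=
  forall x x' : 'rV[R]_n, dotv (x *m T) x' = (br x x' *m mu) 0 0.

Definition inV (R : comNzRingType) (n m : nat)
    (br : 'rV[R]_n -> 'rV[R]_n -> 'rV[R]_m) (T : 'M[R]_n) : Prop :=
  exists mu : 'cV[R]_m, isJ br mu T.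

Definition n_eigs (F : fieldType) (n : nat) (A : 'M[F]_n) (k : nat) : Prop :=
  exists s : seq F, [/\ uniq s, size s = k &
     forall z, eigenvalue A z <-> z \in s].

Definition cplx (R : rcfType) (n : nat) (A : 'M[R]_n) : 'M[R[i]]_n :=
  map_mx (fun x => (x%:C)%C) A.

Definition inVgen (R : rcfType) (n m : nat)
    (br : 'rV[R]_n -> 'rV[R]_n -> 'rV[R]_m) (S : 'M[R]_n) : Prop :=
  inV br S /\ exists k, n_eigs (cplx S) k /\
    forall T k', inV br T -> n_eigs (cplx T) k' -> (k' <= k)%N.

Definition is_orth_proj (R : fieldType) (n : nat) (E : 'M[R]_n) (e p : 'rV[R]_n) : Prop :=
  (p <= E)%MS /\ forall w : 'rV[R]_n, (w <= E)%MS -> dotv (e - p) w = 0.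

(* Main.v *)
Require Import Defs.
From HB Require Import structures.
From mathcomp Require Import all_boot all_order all_algebra.
From mathcomp Require Import complex.
From mathcomp Require Import ring zify.
Import Order.TTheory GRing.Theory Num.Theory.
Local Open Scope ring_scope.
Lemma realmx_eq0 (R : realDomainType) p q (Y : 'M[R]_(p,q)) :
  Y *m Y^T = 0 -> Y = 0.
Proof.
move=> H; apply/matrixP => i j; rewrite mxE.
have : (Y *m Y^T) i i = 0 by rewrite H mxE.
rewrite mxE => /eqP; rewrite psumr_eq0; last by move=> k _; rewrite mxE -expr2 sqr_ge0.
move=> /allP /(_ j) ; rewrite mem_index_enum => /(_ isT) /implyP /(_ isT).
by rewrite mxE -expr2 sqrf_eq0 => /eqP.
Qed.

Lemma realmx_cancel (R : realDomainType) p q r (Y : 'M[R]_(p,q)) (B : 'M[R]_(q,r)) :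
  Y *m B *m B^T = 0 -> Y *m B = 0.
Proof.
move=> H; apply: realmx_eq0; by rewrite trmx_mul mulmxA H mul0mx.
Qed.

Lemma dotv_delta (R : comNzRingType) n (T : 'M[R]_n) i j :
  dotv (delta_mx 0 i *m T) (delta_mx 0 j) = T i j.
Proof. by rewrite /dotv trmx_delta -rowE -colE !mxE. Qed.

Lemma inV_skew (R : comNzRingType) n m (br : 'rV[R]_n -> 'rV[R]_n -> 'rV[R]_m)
  (Hbr : strat2_bracket br) T : inV br T -> T^T = - T.
Proof.
case: Hbr => _ Hanti _ _ [mu HJ]; apply/matrixP => i j.
rewrite !mxE -!dotv_delta !HJ Hanti mulNmx mxE.
by [].
Qed.

Lemma inV_comb (R : comNzRingType) n m (br : 'rV[R]_n -> 'rV[R]_n -> 'rV[R]_m)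
  S T b : inV br S -> inV br T -> inV br (S + b *: T).
Proof.
move=> [mu1 H1] [mu2 H2]; exists (mu1 + b *: mu2) => x x'.
have e1 : forall (A B : 'M[R]_(1,1)) c, (A + c *: B) 0 0 = A 0 0 + c * B 0 0.
  by move=> *; rewrite !mxE.
rewrite /dotv mulmxDr -scalemxAr mulmxDl -scalemxAl mulmxDr -scalemxAr !e1.
by rewrite -H1 -H2.
Qed.

Lemma char_split (F : closedFieldType) n (M : 'M[F]_n) :
  {rs | char_poly M = \prod_(r <- rs) ('X - r%:P)}.
Proof.
have [rs Hrs] := closed_field_poly_normal (char_poly M).
by exists rs; rewrite Hrs (monicP (char_poly_monic _)) scale1r.
Qed.

Lemma n_eigs_ex (F : closedFieldType) n (M : 'M[F]_n) : exists k, n_eigs M k.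
Proof.
have [rs Hrs] := char_split _ _ M.
exists (size (undup rs)), (undup rs); split => // [|z]; first exact: undup_uniq.
by rewrite mem_undup eigenvalue_root_char Hrs root_prod_XsubC.
Qed.

Lemma skew_nilp_eq0 (R : realDomainType) n (T : 'M[R]_n.+1) k :
  T^T = - T -> T ^+ k = 0 -> T = 0.
Proof.
move=> Hs Hk; set B := T * T.
have HB : B^T = B by rewrite /B /GRing.mul /= trmx_mul Hs mulNmx mulmxN opprK.
have Bk : B ^+ k = 0 by rewrite /B -expr2 -exprM mul2n -addnn exprD Hk mul0r.
have B0 : B = 0.
  clear Hk; elim: k Bk => [|k IH] Bk.
    by rewrite -[B]mulr1 -(expr0 B) Bk mulr0.
  case: k IH Bk => [|k] IH Bk; first by rewrite expr1 in Bk.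
  apply: IH; rewrite exprSr -mulmxE; apply: (@realmx_cancel _ _ _ _ (B ^+ k) B).
  by rewrite HB !mulmxE -!exprSr.
have : 1%:M *m T *m T^T = 0 by rewrite mul1mx Hs mulmxN mulmxE -/B B0 oppr0.
by move/realmx_cancel; rewrite mul1mx.
Qed.
Local Open Scope complex_scope.
Notation cRe := complex.Re.
Notation cIm := complex.Im.
Lemma ReD (R : rcfType) : {morph (@complex.Re R) : x y / x + y}.
Proof. by case=> a b [c d]. Qed.
Lemma ImD (R : rcfType) : {morph (@complex.Im R) : x y / x + y}.
Proof. by case=> a b [c d]. Qed.
Lemma Re_mulR (R : rcfType) (u : R[i]) c : cRe (u * c%:C) = cRe u * c.
Proof. by case: u => a b /=; rewrite mulr0 subr0. Qed.
Lemma Im_mulR (R : rcfType) (u : R[i]) c : cIm (u * c%:C) = cIm u * c.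
Proof. by case: u => a b /=; rewrite mulr0 add0r. Qed.
Lemma Re_mul (R : rcfType) (r u : R[i]) : cRe (r * u) = cRe r * cRe u - cIm r * cIm u.
Proof. by case: r => a b; case: u => c d. Qed.
Lemma Im_mul (R : rcfType) (r u : R[i]) : cIm (r * u) = cRe r * cIm u + cIm r * cRe u.
Proof. by case: r => a b; case: u => c d /=; rewrite addrC. Qed.

Lemma Re_mx_mul (R : rcfType) n (v : 'rV[R[i]]_n) (A : 'M[R]_n) :
  map_mx (@complex.Re R) (v *m map_mx (real_complex R) A) = map_mx (@complex.Re R) v *m A.
Proof.
apply/matrixP => i j; rewrite !mxE (big_morph _ (@ReD R) (erefl _)).
by apply: eq_bigr => k _; rewrite !mxE Re_mulR.
Qed.
Lemma Im_mx_mul (R : rcfType) n (v : 'rV[R[i]]_n) (A : 'M[R]_n) :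
  map_mx (@complex.Im R) (v *m map_mx (real_complex R) A) = map_mx (@complex.Im R) v *m A.
Proof.
apply/matrixP => i j; rewrite !mxE (big_morph _ (@ImD R) (erefl _)).
by apply: eq_bigr => k _; rewrite !mxE Im_mulR.
Qed.

Lemma dot_ge0 (R : realDomainType) n (x : 'rV[R]_n) : 0 <= (x *m x^T) 0 0.
Proof. by rewrite mxE sumr_ge0 // => k _; rewrite mxE -expr2 sqr_ge0. Qed.

Lemma dot_eq0 (R : realDomainType) n (x : 'rV[R]_n) : (x *m x^T) 0 0 = 0 -> x = 0.
Proof.
move=> H; apply: realmx_eq0; apply/matrixP => i j.
by rewrite !ord1 H mxE.
Qed.

Lemma cplx_entry_eq0 (R : rcfType) n (v : 'rV[R[i]]_n) :
  map_mx (@complex.Re R) v = 0 -> map_mx (@complex.Im R) v = 0 -> v = 0.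
Proof.
move=> /matrixP Hx /matrixP Hy; apply/matrixP => i j.
have := Hx i j; have := Hy i j; rewrite !mxE.
by case: (v i j) => a b /= -> ->.
Qed.

Lemma sym_real_eig (R : rcfType) n (A : 'M[R]_n) (r : R[i]) :
  A^T = A -> eigenvalue (map_mx (real_complex R) A) r ->
  r = (cRe r)%:C /\ eigenvalue A (cRe r).
Proof.
move=> HA /eigenvalueP [v Hv nz].
set x := map_mx (@complex.Re R) v; set y := map_mx (@complex.Im R) v.
set a := cRe r; set b := cIm r.
have Hx : x *m A = a *: x - b *: y.
  rewrite /x -Re_mx_mul Hv; apply/matrixP => i j; rewrite !mxE Re_mul.
  done.
have Hy : y *m A = a *: y + b *: x.
  rewrite /y -Im_mx_mul Hv; apply/matrixP => i j; rewrite !mxE Im_mul.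
  by rewrite addrC.
have sym : x *m A *m y^T = x *m (y *m A)^T by rewrite trmx_mul HA mulmxA.
rewrite Hx Hy mulmxBl linearD /= !linearZ /= mulmxDr -!scalemxAl -!scalemxAr in sym.
have eA : forall (P Q : 'M[R]_1) c d, (c *: P + d *: Q) 0 0 = c * P 0 0 + d * Q 0 0.
  by move=> *; rewrite !mxE.
have eB : forall (P Q : 'M[R]_1) c d, (c *: P - d *: Q) 0 0 = c * P 0 0 - d * Q 0 0.
  by move=> *; rewrite !mxE.
move/matrixP: sym => /(_ 0 0); rewrite eA eB.
set xy := (x *m y^T) 0 0; set X := (x *m x^T) 0 0; set Y := (y *m y^T) 0 0.
move=> /addrI /eqP; rewrite eq_sym -subr_eq0 opprK -mulrDr mulf_eq0 => /orP [/eqP b0|].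
  split; first by move: b0; rewrite /a /b; case: (r) => p q /= ->.
  rewrite b0 scale0r subr0 in Hx; rewrite b0 scale0r addr0 in Hy.
  have [x0|xnz] := eqVneq x 0.
    have [y0|ynz] := eqVneq y 0.
      by move: nz; rewrite (cplx_entry_eq0 _ _ _ x0 y0) eqxx.
    by apply/eigenvalueP; exists y.
  by apply/eigenvalueP; exists x.
rewrite paddr_eq0 ?dot_ge0 // => /andP [/eqP /dot_eq0 x0 /eqP /dot_eq0 y0].
by move: nz; rewrite (cplx_entry_eq0 _ _ _ x0 y0) eqxx.
Qed.

Lemma horner_XsubC (R : comNzRingType) n (A : 'M[R]_n.+1) l :
  horner_mx A ('X - l%:P) = A - l%:M.
Proof. by rewrite rmorphB /= horner_mx_X horner_mx_C. Qed.

Lemma prod_rem (R : comNzRingType) (s : seq R) l : l \in s ->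
  \prod_(x <- s) ('X - x%:P) = ('X - l%:P) * \prod_(x <- rem l s) ('X - x%:P).
Proof. by move=> ls; rewrite (perm_big _ (perm_to_rem ls)) big_cons. Qed.

Lemma sym_reduce (R : realDomainType) n (A : 'M[R]_n.+1) (sA t : seq R) :
  A^T = A -> {subset t <= sA} ->
  horner_mx A (\prod_(l <- sA) ('X - l%:P) * \prod_(l <- t) ('X - l%:P)) = 0 ->
  horner_mx A (\prod_(l <- sA) ('X - l%:P)) = 0.
Proof.
move=> HA; elim: t => [|l t IH] sub H; first by rewrite big_nil mulr1 in H.
apply: IH; first by move=> z zt; apply: sub; rewrite inE zt orbT.
have ls : l \in sA by apply: sub; rewrite inE eqxx.
move: H; rewrite big_cons (prod_rem _ _ _ ls).
set p' := \prod_(x <- rem l sA) _; set q := \prod_(l0 <- t) _.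
have -> : ('X - l%:P) * p' * (('X - l%:P) * q) = (p' * q) * ('X - l%:P) * ('X - l%:P).
  by ring.
have -> : ('X - l%:P) * p' * q = (p' * q) * ('X - l%:P).
  by ring.
rewrite !rmorphM /= !horner_XsubC -!mulmxE => H.
apply: (@realmx_cancel _ _ _ _ _ (A - l%:M)).
have -> : (A - l%:M)^T = A - l%:M by rewrite raddfB /= HA tr_scalar_mx.
exact: H.
Qed.

Lemma sym_minpoly (R : rcfType) n (A : 'M[R]_n.+1) (sA : seq R) :
  A^T = A -> (forall z, eigenvalue A z <-> z \in sA) ->
  horner_mx A (\prod_(l <- sA) ('X - l%:P)) = 0.
Proof.
move=> HA HsA.
pose AC := map_mx (real_complex R) A.
have [rs Hrs] := char_split _ _ AC.
have CH := Cayley_Hamilton AC; rewrite Hrs in CH.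
have Hr : forall r, r \in rs -> r = (cRe r)%:C /\ eigenvalue A (cRe r).
  move=> r rr; apply: sym_real_eig => //.
  by rewrite eigenvalue_root_char Hrs root_prod_XsubC.
have q0 : horner_mx A (\prod_(l <- map (@complex.Re R) rs) ('X - l%:P)) = 0.
  apply: (map_mx_inj (f := real_complex R)).
  rewrite map_horner_mx rmorph0 /= -CH; congr horner_mx.
  rewrite big_map rmorph_prod; apply: eq_big_seq => r rr /=.
  by rewrite rmorphB /= map_polyX map_polyC /= -(Hr r rr).1.
apply: (@sym_reduce _ _ A sA (map (@complex.Re R) rs)) => //.
  by move=> z /mapP [r rr ->]; apply/HsA; exact: (Hr r rr).2.
by rewrite rmorphM /= q0 mulr0.
Qed.

Lemma horner_mx_sym (R : comNzRingType) n (A : 'M[R]_n.+1) p :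
  A^T = A -> (horner_mx A p)^T = horner_mx A p.
Proof.
move=> HA; elim/poly_ind: p => [|p c IH]; first by rewrite rmorph0 trmx0.
rewrite rmorphD rmorphM /= horner_mx_X horner_mx_C raddfD /= tr_scalar_mx.
rewrite -mulmxE trmx_mul IH HA; congr (_ + _).
have := congr1 (horner_mx A) (mulrC p 'X).
by rewrite !rmorphM /= horner_mx_X -!mulmxE.
Qed.

Lemma horner_mx_eigvec (R : comNzRingType) n (A : 'M[R]_n.+1) (w : 'rV[R]_n.+1) l p :
  w *m A = l *: w -> w *m horner_mx A p = p.[l] *: w.
Proof.
move=> Hw; elim/poly_ind: p => [|p c IH]; first by rewrite rmorph0 mulmx0 horner0 scale0r.
rewrite rmorphD rmorphM /= horner_mx_X horner_mx_C mulmxDr -mulmxE mulmxA IH.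
rewrite -scalemxAl Hw scalerA mul_mx_scalar hornerE /= scalerDl.
by rewrite hornerMX hornerC.
Qed.

Lemma proj_exists (R : rcfType) n (A : 'M[R]_n.+1) (sA : seq R) (e : 'rV[R]_n.+1) l :
  A^T = A -> uniq sA -> (forall z, eigenvalue A z <-> z \in sA) -> l \in sA ->
  exists q : {poly R}, (size q <= size sA)%N /\
    is_orth_proj (eigenspace A l) e (e *m horner_mx A q).
Proof.
move=> HA usA HsA ls.
set L := \prod_(x <- rem l sA) ('X - x%:P).
have cnz : L.[l] != 0.
  by rewrite -/(root L l) /L root_prod_XsubC mem_rem_uniqF.
pose q := (L.[l])^-1 *: L.
exists q; split.
  apply: leq_trans (size_scale_leq _ _) _.
  by rewrite /L size_prod_XsubC size_rem // prednK // (leq_trans _ (count_size (pred1 l) sA)) // -has_count has_pred1.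
split.
  apply/eigenspaceP.
  have H0 : horner_mx A (q * ('X - l%:P)) = 0.
    rewrite /q -scalerAl linearZ /= mulrC /L -prod_rem //.
    by rewrite sym_minpoly // scaler0.
  move: H0; rewrite rmorphM /= horner_XsubC -mulmxE mulmxBr mul_mx_scalar => /eqP.
  rewrite subr_eq0 => /eqP H0.
  by rewrite -mulmxA H0 scalemxAr.
move=> w /eigenspaceP Hw.
have -> : e - e *m horner_mx A q = e *m horner_mx A (1 - q).
  by rewrite rmorphB /= rmorph1 mulmxBr mulmx1.
rewrite /dotv -mulmxA -(@horner_mx_sym _ _ A (1 - q) HA) -trmx_mul (@horner_mx_eigvec _ _ A w l _ Hw).
rewrite /q !hornerE mulVf // subrr scale0r trmx0 mulmx0 mxE.
done.
Qed.

Lemma krylov (R : comNzRingType) n (S T : 'M[R]_n.+1) (e : 'rV[R]_n.+1) (q : {poly R}) k :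
  (size q <= k)%N -> (forall j, (j < 2 * k)%N -> e *m S ^+ j *m T = 0) ->
  e *m horner_mx (S ^+ 2) q *m T = 0 /\ e *m horner_mx (S ^+ 2) q *m S *m T = 0.
Proof.
move=> Hq H.
have hE : horner_mx (S ^+ 2) q = \sum_(i < size q) q`_i *: S ^+ (2 * i).
  rewrite -{1}[q]coefK poly_def linear_sum /=; apply: eq_bigr => i _.
  by rewrite linearZ /= rmorphXn /= horner_mx_X exprM.
rewrite hE mulmx_sumr !mulmx_suml; split.
  rewrite big1 // => i _; rewrite -scalemxAr -scalemxAl H ?scaler0 //.
  by rewrite ltn_mul2l /= (leq_trans (ltn_ord i) Hq).
rewrite big1 // => i _; rewrite -scalemxAr -!scalemxAl. rewrite -[e *m _ *m S]mulmxA mulmxE -exprSr H ?scaler0 //.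
by have := leq_trans (ltn_ord i) Hq; lia.
Qed.

Lemma cplx_E (R : rcfType) n (A : 'M[R]_n) : cplx A = map_mx (real_complex R) A.
Proof. by []. Qed.

Lemma skew_form0 (R : rcfType) n (S : 'M[R]_n) (p : 'rV[R]_n) :
  S^T = - S -> (p *m S *m p^T) 0 0 = 0.
Proof.
move=> HS; set Q := p *m S *m p^T.
have : Q^T = - Q.
 by rewrite /Q !trmx_mul trmxK HS mulNmx mulmxN mulmxA.
move/matrixP => /(_ 0 0); rewrite !mxE => /eqP; rewrite -addr_eq0 -mulr2n.
by rewrite mulrn_eq0 /= => /eqP.
Qed.

Lemma eigvec_killed (R : rcfType) n (S T : 'M[R]_n.+1) (e : 'rV[R]_n.+1) (sA : seq R) z :
  S^T = - S ->
  uniq sA -> (forall z, eigenvalue (S ^+ 2) z <-> z \in sA) ->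
  (forall a, eigenvalue (S ^+ 2) a ->
     forall p, is_orth_proj (eigenspace (S ^+ 2) a) e p -> p != 0) ->
  (forall j, (j < 2 * size sA)%N -> e *m S ^+ j *m T = 0) ->
  eigenvalue (map_mx (real_complex R) S) z ->
  exists2 v : 'rV[R[i]]_n.+1, v != 0 & v *m map_mx (real_complex R) S = z *: v /\
                      v *m map_mx (real_complex R) T = 0.
Proof.
move=> HS usA HsA He HT /eigenvalueP [v0 Hv0 nz0].
set A := S ^+ 2.
have HA : A^T = A.
  by rewrite /A expr2 -mulmxE trmx_mul HS mulmxN mulNmx opprK.
set SC := map_mx (real_complex R) S.
have ez2 : eigenvalue (map_mx (real_complex R) A) (z ^+ 2).
  apply/eigenvalueP; exists v0 => //.
  by rewrite /A rmorphXn /= expr2 -mulmxE mulmxA Hv0 -scalemxAl Hv0 scalerA.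
have [Ez2 eA] := sym_real_eig _ _ _ _ HA ez2.
set l := complex.Re (z ^+ 2) in Ez2 eA.
have ls : l \in sA by apply/HsA.
have [q [sq Hproj]] := proj_exists _ _ _ _ e _ HA usA HsA ls.
set p := e *m horner_mx A q in Hproj.
have pnz : p != 0 by apply: He Hproj.
have [pT pST] := krylov _ _ _ _ _ _ _ sq HT.
rewrite -/p in pT pST.
have pA : p *m S *m S = l *: p.
  by case: Hproj => /eigenspaceP <- _; rewrite /A expr2 -mulmxE mulmxA.
set TC := map_mx (real_complex R) T.
have mP : forall (u : 'rV[R]_n.+1) (M : 'M[R]_n.+1),
    map_mx (real_complex R) u *m map_mx (real_complex R) M = map_mx (real_complex R) (u *m M).
  by move=> u M; rewrite map_mxM.
set ps := p *m S in pA pST.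
set pc := map_mx (real_complex R) p; set psc := map_mx (real_complex R) ps.
set v1 := psc + z *: pc.
have v1S : v1 *m SC = z *: v1.
  rewrite /v1 mulmxDl -scalemxAl !mP pA map_mxZ /= -Ez2 -/ps -/psc.
  by rewrite scalerDr scalerA -expr2 addrC.
have v1T : v1 *m TC = 0.
  by rewrite /v1 mulmxDl -scalemxAl !mP pST pT !map_mx0 scaler0 addr0.
have [v10|v1nz] := eqVneq v1 0; last by exists v1.
have [z0|znz] := eqVneq z 0.
  exists pc; first by rewrite map_mx_eq0.
  split; last by rewrite mP pT map_mx0.
  rewrite mP -/ps -/psc z0 scale0r; move: v10; rewrite /v1 z0 scale0r addr0.
  done.
exfalso.
have pscE : psc = - (z *: pc) by apply/eqP; rewrite -addr_eq0 -/v1 v10.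
have [j pj] : exists j, p 0 j != 0.
  case: (pickP (fun j => p 0 j != 0)) => [j pj | H0]; first by exists j.
  move: pnz; suff -> : p = 0 by rewrite eqxx.
  by apply/matrixP => i k; rewrite ord1 [RHS]mxE; move: (H0 k) => /= /negbFE /eqP.
have psdef : p *m S = ps by [].
clearbody ps p.
have Hj := congr1 (fun M : 'rV[R[i]]_n.+1 => M 0 j) pscE.
rewrite /= /psc /pc !mxE in Hj.
set c := - (ps 0 j) / (p 0 j).
have zc : z = c%:C.
  apply: (mulIf (x := (p 0 j)%:C)); first by rewrite fmorph_eq0.
  by rewrite -rmorphM /c divfK // rmorphN /= Hj opprK.
have psE : ps = - (c *: p).
  apply: (map_mx_inj (f := real_complex R)).
  by rewrite -/psc pscE zc raddfN /= map_mxZ.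
have := skew_form0 _ _ _ p HS; rewrite psdef psE mulNmx -scalemxAl mxE [X in - X]mxE.
move/eqP; rewrite oppr_eq0 mulf_eq0 => /orP [/eqP c0|].
  by move: znz; rewrite zc c0 eqxx.
by move/eqP/dot_eq0 => p0; move: pnz; rewrite p0 eqxx.
Qed.

Lemma scale_prod (K : fieldType) n (I : Type) (a : K) (s : seq I) (F : I -> 'M[K]_n.+1) :
  \prod_(i <- s) (a *: F i) = a ^+ size s *: \prod_(i <- s) F i.
Proof.
elim: s => [|x s IH]; first by rewrite !big_nil expr0 scale1r.
by rewrite !big_cons IH -scalerAl -scalerAr scalerA -exprS.
Qed.

Lemma prod_dvd_pow (F : fieldType) (rs sS : seq F) : {subset rs <= sS} ->
  \prod_(r <- rs) ('X - r%:P) %| (\prod_(s <- sS) ('X - s%:P)) ^+ size rs.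
Proof.
elim: rs => [|r rs IH] sub; first by rewrite big_nil dvd1p.
rewrite big_cons /= exprS; apply: dvdp_mul.
  by rewrite dvdp_XsubCl root_prod_XsubC; apply: sub; rewrite inE eqxx.
by apply: IH => x xr; apply: sub; rewrite inE xr orbT.
Qed.

Lemma pow_prod_eq0 (F : closedFieldType) n (C : 'M[F]_n.+1) (sS : seq F) :
  (forall z, eigenvalue C z -> z \in sS) ->
  (\prod_(s <- sS) (C - s%:M)) ^+ n.+1 = 0.
Proof.
move=> Hs; have [rs Hrs] := char_split _ _ C.
have szr : size rs = n.+1.
  by have := size_char_poly C; rewrite Hrs size_prod_XsubC => -[].
have sub : {subset rs <= sS}.
  by move=> r rr; apply: Hs; rewrite eigenvalue_root_char Hrs root_prod_XsubC.
have /dvdpP [d Hd] := prod_dvd_pow _ _ _ sub.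
have := congr1 (horner_mx C) Hd.
rewrite szr rmorphM /= -Hrs Cayley_Hamilton mulr0 rmorphXn rmorph_prod /=.
by under eq_bigr do rewrite horner_XsubC.
Qed.

Lemma poly_inf_roots (F : numDomainType) (p : {poly F}) :
  (forall k : nat, p.[k.+1%:R] = 0) -> p = 0.
Proof.
move=> Hp; apply/eqP; apply/negPn/negP => nz.
pose rs := [seq (k.+1%:R : F) | k <- iota 0 (size p)].
have H1 : all (root p) rs by apply/allP => x /mapP [k _ ->]; apply/rootP.
have H2 : uniq rs.
  rewrite map_inj_uniq ?iota_uniq // => a b /eqP; rewrite eqr_nat eqSS => /eqP.
  done.
have := max_poly_roots nz H1 H2.
by rewrite size_map size_iota ltnn.
Qed.

Lemma pencil_nilp (F : numFieldType) n (T : 'M[F]_n.+1) (Ms : seq 'M[F]_n.+1) e :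
  (forall k : nat, (\prod_(M <- Ms) (T + k.+1%:R *: M)) ^+ e = 0) ->
  T ^+ (size Ms * e) = 0.
Proof.
move=> H.
pose Pp := (\prod_(M <- Ms) (map_mx polyC T + 'X *: map_mx polyC M)) ^+ e.
have ev : forall t, map_mx (horner_eval t) Pp = (\prod_(M <- Ms) (T + t *: M)) ^+ e.
  move=> t; rewrite /Pp rmorphXn rmorph_prod /=; congr (_ ^+ _).
  apply: eq_bigr => M _; rewrite rmorphD /= map_mxZ /= -!map_mx_comp.
  have hc : forall A : 'M[F]_n.+1, map_mx (horner_eval t \o polyC) A = A.
    by move=> A; apply/matrixP => i j; rewrite !mxE /= /horner_eval hornerC.
  by rewrite !hc /horner_eval hornerX.
have P0 : Pp = 0.
  apply/matrixP => i j; rewrite mxE; apply: poly_inf_roots => k.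
  have := congr1 (fun A : 'M[F]_n.+1 => A i j) (ev k.+1%:R).
  by rewrite H mxE /horner_eval mxE => ->.
have := ev 0; rewrite P0 raddf0.
under eq_bigr do rewrite scale0r addr0.
by rewrite big_const_seq count_predT iter_mulr_1 -exprM => <-.
Qed.


Theorem lemma3p1 (R : rcfType) (n m : nat)
    (br : 'rV[R]_n -> 'rV[R]_n -> 'rV[R]_m)
    (Hbr : strat2_bracket br)
    (S : 'M[R]_n) (HS : inVgen br S) (e : 'rV[R]_n)
    (He : forall a : R, eigenvalue (S ^+ 2) a ->
            forall p, is_orth_proj (eigenspace (S ^+ 2) a) e p -> p != 0)
    (N : nat) (HN : n_eigs (S ^+ 2) N) :
  forall T : 'M[R]_n, inV br T ->
    (forall j : nat, (j < 2 * N)%N -> e *m S ^+ j *m T = 0) -> T = 0.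
Proof.
case: n br Hbr S HS e He HN => [|n] br Hbr S HS e He HN T HT Hj.
  by apply/matrixP => [[]].
case: HS => inVS [k0 [[sS [usS szS HsS]] Hmax]].
case: HN => sA [usA szA HsA]; subst N.
have skS := inV_skew _ _ _ _ Hbr _ inVS.
have skT := inV_skew _ _ _ _ Hbr _ HT.
set SC := map_mx (real_complex R) S; set TC := map_mx (real_complex R) T.
have cE : forall b : R, cplx (S + b *: T) = SC + b%:C *: TC.
  by move=> b; rewrite cplx_E rmorphD /= map_mxZ.
have clA : forall b z, z \in sS -> eigenvalue (cplx (S + b *: T)) z.
  move=> b z zs.
  have [v vnz [vS vT]] := eigvec_killed _ _ _ _ _ _ z skS usA HsA He Hj (iffRL (HsS z) zs).
  apply/eigenvalueP; exists v => //.
  by rewrite cE mulmxDr -scalemxAr vT scaler0 addr0.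
have clB : forall b z, eigenvalue (cplx (S + b *: T)) z -> z \in sS.
  move=> b z.
  have [k' [s' [us' sz' Hs']]] := n_eigs_ex _ _ (cplx (S + b *: T)).
  have le : (k' <= k0)%N.
    by apply: (Hmax (S + b *: T) k' (inV_comb _ _ _ _ _ _ _ inVS HT)); exists s'.
  have sub : {subset sS <= s'} by move=> x xs; apply/Hs'; apply: clA.
  have [_ eqs] := uniq_min_size usS sub (ltac:(by rewrite sz' szS)).
  by move/Hs'; rewrite eqs.
have clC : forall b : R,
    (\prod_(s <- sS) (SC + b%:C *: TC - s%:M)) ^+ n.+1 = 0.
  by move=> b; rewrite -cE; apply: pow_prod_eq0 => z; apply: clB.
have clD : TC ^+ (size (map (fun s => SC - s%:M) sS) * n.+1) = 0.
  apply: pencil_nilp => k.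
  pose b : R := (k.+1%:R)^-1.
  have kC : (k.+1%:R : R[i]) = (k.+1%:R : R)%:C by rewrite rmorph_nat.
  have knz : (k.+1%:R : R) != 0 by rewrite pnatr_eq0.
  have -> : \prod_(M <- map (fun s => SC - s%:M) sS) (TC + k.+1%:R *: M)
      = \prod_(s <- sS) ((k.+1%:R : R[i]) *: (SC + b%:C *: TC - s%:M)).
    rewrite big_map; apply: eq_bigr => s _.
    rewrite !scalerBr scalerDr scalerA kC -rmorphM /b mulfV // rmorph1 scale1r.
    by rewrite addrA (addrC TC).
  by rewrite scale_prod exprZn clC scaler0.
have : map_mx (real_complex R) (T ^+ (size (map (fun s => SC - s%:M) sS) * n.+1)) =
       map_mx (real_complex R) 0 by rewrite rmorphXn /= -/TC clD map_mx0.
move/map_mx_inj => Tm.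
exact: skew_nilp_eq0 _ _ _ _ skT Tm.
Qed.
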